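(* Let $W$ be a symmetric binary-input discrete memoryless channel with finite output alphabet $\mathcal{Y}$, let $S_1=|\{y\in\mathcal{Y}:1\cdot y=y\}|$ and $S_2=|\{y\in\mathcal{Y}:1\cdot y\ne y\}|$, and let $N=2^n$. Then the number $n_c(N,0,S_1,S_2)$ of distinct values of $W_N^{(0)}(\mathbf{y})$ as $\mathbf{y}$ ranges over $\mathcal{Y}^N$ satisfies $$n_c(N,0,S_1,S_2)\le\binom{N+S_2/2+S_1-1}{S_2/2+S_1-1}.$$
   Context: Symmetric channel: $W(y|x)$, $x\in\{0,1\}$, with an involution $y\mapsto 1\cdot y$ of $\mathcal{Y}$ such that $W(1\cdot y|0)=W(y|1)$ and $W(1\cdot y|1)=W(y|0)$ ($S_2$ is thus even). $W^N(\mathbf{y}|\mathbf{x})=\prod_j W(y_j|x_j)$. With $G_N=F^{\otimes n}$, $F=\begin{pmatrix}1&0\\1&1\end{pmatrix}$ over $\mathbb{F}_2$ (invertible, so its row space is $\mathbb{F}_2^N$), $W_N^{(0)}(\mathbf{y})=\frac{1}{2^{N-1}}\sum_{\mathbf{c}\in\mathbb{F}_2^N}W^N(\mathbf{y}|\mathbf{c})$. *)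

(* Defs.v *)
From mathcomp Require Import all_boot all_order all_algebra.
Set Implicit Arguments. Unset Strict Implicit. Unset Printing Implicit Defensive.
Import Order.TTheory GRing.Theory Num.Theory.
Local Open Scope ring_scope.

(* A binary-input channel with finite output alphabet Y: W y x = W(y|x),
   input x : bool (false = 0, true = 1). *)
Definition is_channel (R : realFieldType) (Y : finType) (W : Y -> bool -> R) :=
  (forall y x, 0 <= W y x) /\ (forall x, \sum_(y : Y) W y x = 1).

(* Symmetry with respect to the involution inv (y |-> 1 . y). *)
Definition symmetric_channel (R : realFieldType) (Y : finType)
    (W : Y -> bool -> R) (inv : Y -> Y) :=
  involutive inv /\
  (forall y, W (inv y) false = W y true) /\
  (forall y, W (inv y) true = W y false).

Definition WN (R : realFieldType) (Y : finType) (W : Y -> bool -> R) (N : nat)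
    (y : {ffun 'I_N -> Y}) (c : {ffun 'I_N -> bool}) : R :=
  \prod_(j < N) W (y j) (c j).

Definition WN0 (R : realFieldType) (Y : finType) (W : Y -> bool -> R) (N : nat)
    (y : {ffun 'I_N -> Y}) : R :=
  (2 ^+ N.-1)^-1 * \sum_(c : {ffun 'I_N -> bool}) WN W y c.

(* Main.v *)
Require Import Defs.
From mathcomp Require Import all_boot all_order all_algebra.
Set Implicit Arguments. Unset Strict Implicit. Unset Printing Implicit Defensive.
Lemma count_orbits (Y : finType) (inv : Y -> Y) (Hi : involutive inv) :
  #|[set y | enum_rank y <= enum_rank (inv y)]| =
  #|[set y : Y | inv y == y]| + #|[set y : Y | inv y != y]| %/ 2.
Proof.
set T := [set y | _ <= _]; set F := [set y : Y | inv y == y].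
set D := [set y : Y | inv y != y].
have key y : inv y != y -> (enum_rank (inv y) <= enum_rank y) = ~~ (enum_rank y <= enum_rank (inv y)).
  move=> ne; rewrite -ltnNge ltn_neqAle.
  have -> : (enum_rank (inv y) != enum_rank y :> nat) by rewrite (inj_eq val_inj) (inj_eq enum_rank_inj).
  by [].
have eB : D :\: T = inv @: (D :&: T).
  apply/setP => y; rewrite !inE; apply/idP/imsetP.
    move=> /andP[nT ne]; exists (inv y); last by rewrite Hi.
    idtac.
    rewrite !inE Hi eq_sym ne /=.
    by rewrite key.
  move=> [x]; rewrite !inE => /andP[ne le] ->; rewrite Hi eq_sym ne andbT.
  by have := key (inv x); rewrite Hi eq_sym => <-.
have hD : #|D| = (#|D :&: T|).*2.
  by rewrite -(cardsID T D) eB card_imset ?addnn //; apply: (can_inj Hi).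
have hT : #|T| = #|F| + #|D :&: T|.
  rewrite -(cardsID F T); congr (_ + _).
    apply: eq_card => y; rewrite !inE.
    by case: eqP => [->|]; rewrite ?leqnn ?andbF.
  by apply: eq_card => y; rewrite !inE andbC.
by rewrite hT hD -muln2 mulnK.
Qed.

Import Order.TTheory GRing.Theory Num.Theory.
Local Open Scope ring_scope.

Theorem theorem5 (R : realFieldType) (Y : finType) (W : Y -> bool -> R)
    (inv : Y -> Y) (n : nat) :
  is_channel W -> symmetric_channel W inv ->
  let N := (2 ^ n)%N in
  let S1 := #|[set y : Y | inv y == y]| in
  let S2 := #|[set y : Y | inv y != y]| in
  (size (undup (codom (@WN0 R Y W N))) <=
     'C(N + S2 %/ 2 + S1 - 1, S2 %/ 2 + S1 - 1))%N.
Proof.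
move=> _ HS; case: HS => Hi [H0 H1]; cbv zeta; set N := (2 ^ n)%N.
have E := count_orbits Hi.
set T := [set y | (_ <= _)%N] in E.
pose s y := W y true + W y false.
have hs y : s (inv y) = s y by rewrite /s H0 H1 addrC.
pose r y := if y \in T then y else inv y.
have hrT y : r y \in T.
  rewrite /r; case: ifP => // nT; rewrite !inE Hi.
  by move: nT; rewrite inE => /negbT; rewrite -ltnNge => /ltnW.
have hsr y : s (r y) = s y by rewrite /r; case: ifP.
have hW y : WN0 W y = (2 ^+ N.-1)^-1 * \prod_(j < N) s (y j).
  rewrite /WN0 /WN; congr (_ * _); rewrite -(bigA_distr_bigA (fun (j : 'I_N) (b : bool) => W (y j) b)) /=.
  by apply: eq_bigr => j _; rewrite big_bool.
have E2 : (#|[set y | inv y != y]| %/ 2 + #|[set y | inv y == y]| = #|T|)%N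
  by rewrite E addnC.
rewrite -addnA E2.
have Npos : (0 < N)%N by rewrite expn_gt0.
case eK: #|T| => [|k].
  have Yn : Y -> False by move=> y; move: (hrT y); rewrite (card0_eq eK).
  apply: leq_trans (size_undup _) _.
  rewrite size_codom card_ffun card_ord.
  have -> : #|Y| = 0%N by apply/eqP; rewrite cardT; case: (enum Y) => // y.
  by rewrite exp0n.
have [x0 Hx0] : exists x0, x0 \in T.
  by apply/set0Pn; rewrite -card_gt0 eK.
pose e y : 'I_k.+1 := cast_ord eK (enum_rank_in Hx0 (r y)).
pose d (i : 'I_k.+1) := s (enum_val (cast_ord (esym eK) i)).
have hde y : d (e y) = s y.
  by rewrite /d /e cast_ordK enum_rankK_in ?hsr.
pose phi (y : {ffun 'I_N -> Y}) : N.-tuple 'I_k.+1 :=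
  sort_tuple (fun a b : 'I_k.+1 => (a <= b)%N) [tuple e (y j) | j < N].
pose F (t : N.-tuple 'I_k.+1) := 2 ^- N.-1 * \prod_(i <- t) d i.
have hF y : WN0 W y = F (phi y).
  rewrite hW /F /phi; congr (_ * _).
  rewrite /= (perm_big _ (permEl (perm_sort _ _))) /= big_map big_enum /=.
  by apply: eq_bigr => j _; rewrite hde.
pose A := [set t : N.-tuple 'I_k.+1 | sorted leq (map val t)].
have hA y : phi y \in A.
  rewrite inE sorted_map /phi /=.
  by apply: sort_sorted => a b; apply: leq_total.
apply: (@leq_trans (size [seq F t | t in A])).
  apply: uniq_leq_size; first exact: undup_uniq.
  move=> x; rewrite mem_undup => /codomP [y ->].
  by rewrite hF; apply: map_f; rewrite mem_enum.
rewrite size_image card_sorted_tuples subn1 addnS /= subn1 /=.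
by rewrite -bin_sub ?leq_addr // addKn.
Qed.
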